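(* Let $K$ be a valued field, $d\ge 1$, and $X\subseteq K^d$. Suppose that for all $x,y,z\in X$ and all $\alpha,\beta,\gamma\in\mathcal{O}$ with $\alpha+\beta+\gamma=1$ we have $\alpha x+\beta y+\gamma z\in X$. Then $X$ is convex.
   Context: $K$ is a field with a (Krull) valuation $\nu:K\to\Gamma\cup\{\infty\}$, valuation ring $\mathcal{O}=\{x:\nu(x)\ge 0\}$, maximal ideal $\mathfrak{m}=\{x:\nu(x)>0\}$ and residue field $k=\mathcal{O}/\mathfrak{m}$. A set $X\subseteq K^d$ is convex if for every $n\ge 1$, all $x_1,\dots,x_n\in X$ and all $\alpha_1,\dots,\alpha_n\in\mathcal{O}$ with $\alpha_1+\dots+\alpha_n=1$, we have $\alpha_1x_1+\dots+\alpha_nx_n\in X$ (such a sum is called a convex combination). *)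

(* Defs.v *)
From mathcomp Require Import all_boot all_order all_algebra.
Set Implicit Arguments. Unset Strict Implicit. Unset Printing Implicit Defensive.
Import GRing.Theory.
Local Open Scope ring_scope.

(* Value group: an abelian group G (zmodType) with a relation [le] that is a
   translation-invariant total order.  The value "infinity" is [None]. *)
Definition ordered_abelian_group (G : zmodType) (le : rel G) : Prop :=
  [/\ reflexive le, transitive le, antisymmetric le, total le
    & forall a b c : G, le a b -> le (a + c) (b + c)].

Definition le_inf (G : zmodType) (le : rel G) (a b : option G) : bool :=
  match a, b with
  | _, None => true
  | None, Some _ => false
  | Some x, Some y => le x y
  end.

Definition add_inf (G : zmodType) (a b : option G) : option G :=
  match a, b with
  | Some x, Some y => Some (x + y)
  | _, _ => None
  end.

Definition min_inf (G : zmodType) (le : rel G) (a b : option G) : option G :=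
  if le_inf le a b then a else b.

Definition is_valuation (K : fieldType) (G : zmodType) (le : rel G)
    (nu : K -> option G) : Prop :=
  [/\ ordered_abelian_group le,
      forall x : K, nu x = None <-> x = 0,
      forall x y : K, nu (x * y) = add_inf (nu x) (nu y)
    & forall x y : K, le_inf le (min_inf le (nu x) (nu y)) (nu (x + y))].

Definition val_ring (K : fieldType) (G : zmodType) (le : rel G)
    (nu : K -> option G) (x : K) : Prop :=
  le_inf le (Some 0) (nu x).

Definition convex (K : fieldType) (O : K -> Prop) (d : nat)
    (X : 'rV[K]_d -> Prop) : Prop :=
  forall (n : nat) (x : 'I_n -> 'rV[K]_d) (alpha : 'I_n -> K),
    (0 < n)%N ->
    (forall i, X (x i)) ->
    (forall i, O (alpha i)) ->
    \sum_(i < n) alpha i = 1 ->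
    X (\sum_(i < n) alpha i *: x i).

(* Main.v *)
Require Import Defs.
From mathcomp Require Import all_boot all_order all_algebra.
Import GRing.Theory.
Local Open Scope ring_scope.

Lemma vid (K : fieldType) d (x0 x1 x2 : 'rV[K]_d) a0 a2 t :
  a0 *: x0 + (t * a0) *: x1 + a2 *: x2 =
  (t * a0 + a2) *: x2 + a0 *: (1 *: x0 + t *: x1 + (- t) *: x2).
Proof.
rewrite !scalerDr !scalerA mulr1 !scalerDl !mulrN !scaleNr (mulrC a0 t).
set A := a0 *: x0; set B := (t * a0) *: x1; set C := (t*a0) *: x2.
by rewrite [RHS]addrC subrKA.
Qed.

Section Gen.
Variables (K : fieldType) (O : K -> Prop) (d : nat) (X : 'rV[K]_d -> Prop).
Hypotheses (O0 : O 0) (O1 : O 1) (ON : forall {a}, O a -> O (- a))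
  (OD : forall {a b}, O a -> O b -> O (a + b))
  (Odiv : forall {a b}, O a -> O b ->
     (exists2 t, O t & b = t * a) \/ (exists2 t, O t & a = t * b)).
Hypothesis H3 : forall {x y z : 'rV[K]_d} {alpha beta gamma : K},
      X x -> X y -> X z -> O alpha -> O beta -> O gamma ->
      alpha + beta + gamma = 1 ->
      X (alpha *: x + beta *: y + gamma *: z).

Lemma key m : forall (x : 'I_m.+1 -> 'rV[K]_d) (alpha : 'I_m.+1 -> K),
    (forall i, X (x i)) -> (forall i, O (alpha i)) ->
    \sum_(i < m.+1) alpha i = 1 ->
    X (\sum_(i < m.+1) alpha i *: x i).
Proof.
elim: m => [|m IH] x alpha Xx Oa Hs.
  move: Hs; rewrite !big_ord_recl !big_ord0 !addr0 => ->; by rewrite scale1r.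
case: m IH x alpha Xx Oa Hs => [|m] IH x alpha Xx Oa Hs.
  move: Hs; rewrite !big_ord_recl !big_ord0 !addr0 => Hs.
  have := H3 (Xx ord0) (Xx (lift ord0 ord0)) (Xx ord0) (Oa ord0)
    (Oa (lift ord0 ord0)) O0.
  by rewrite addr0 scale0r addr0; apply.
set a0 := alpha ord0; set a1 := alpha (lift ord0 ord0);
set a2 := alpha (lift ord0 (lift ord0 ord0)).
set x0 := x ord0; set x1 := x (lift ord0 ord0);
set x2 := x (lift ord0 (lift ord0 ord0)).
suff red : forall (u : 'rV[K]_d) (cu cv : K), X u -> O cu -> O (cv + a2) ->
   a0 *: x0 + a1 *: x1 + a2 *: x2 = (cv + a2) *: x2 + cu *: u ->
   a0 + a1 + a2 = (cv + a2) + cu ->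
   X (\sum_(i < m.+3) alpha i *: x i).
  have Oa0 := Oa ord0; have Oa1 := Oa (lift ord0 ord0).
  have Oa2 := Oa (lift ord0 (lift ord0 ord0)).
  case: (Odiv Oa0 Oa1) => [[t Ot Ht]|[t Ot Ht]].
  - have Xu : X (1 *: x0 + t *: x1 + (- t) *: x2).
      by apply: H3 => //; [exact: Xx|exact: Xx|exact: Xx|exact: ON|rewrite addrK].
    apply: (red _ a0 a1 Xu Oa0 (OD Oa1 Oa2)).
    + by rewrite /a1 Ht vid.
    + by rewrite -addrA addrC.
  - have Xu : X (1 *: x1 + t *: x0 + (- t) *: x2).
      by apply: H3 => //; [exact: Xx|exact: Xx|exact: Xx|exact: ON|rewrite addrK].
    apply: (red _ a1 a0 Xu Oa1 (OD Oa0 Oa2)).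
    + by rewrite /a0 Ht (addrC ((t * _) *: _)) vid.
    + by rewrite addrAC.
move=> u cu cv Xu Ocu Ocv Hp Hc.
pose y (i : 'I_m.+2) := if val i == 0%N then x2 else if val i == 1%N then u
   else x (inord i.+1).
pose c (i : 'I_m.+2) := if val i == 0%N then cv + a2 else if val i == 1%N then cu
   else alpha (inord i.+1).
have Hrest : forall (F : 'I_m.+3 -> 'rV[K]_d) (G : 'I_m.+3 -> 'rV[K]_d),
   True -> True by [].
have E : \sum_(i < m.+3) alpha i *: x i = \sum_(i < m.+2) c i *: y i.
  rewrite !big_ord_recl /= !addrA -/a0 -/a1 -/a2 -/x0 -/x1 -/x2 Hp.
  rewrite /c /y /=; congr (_ + _); apply: eq_bigr => i _.
  congr (alpha _ *: x _); apply: val_inj; rewrite /= inordK //; rewrite /bump /=;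
    by rewrite !ltnS ltn_ord.
rewrite E; apply: IH.
- move=> i; rewrite /y; case: (val i == 0%N); first exact: Xx.
  by case: (val i == 1%N).
- move=> i; rewrite /c; case: (val i == 0%N) => //.
  by case: (val i == 1%N).
- rewrite -Hs !big_ord_recl /= !addrA -/a0 -/a1 -/a2 Hc.
  rewrite /c /=; congr (_ + _); apply: eq_bigr => i _.
  congr (alpha _); apply: val_inj; rewrite /= inordK //; rewrite /bump /=;
    by rewrite !ltnS ltn_ord.
Qed.

End Gen.


Lemma le_inf_trans (G : zmodType) (le : rel G) : transitive le ->
  forall a b c, le_inf le a b -> le_inf le b c -> le_inf le a c.
Proof.
move=> tr [a|] [b|] [c|] //=; exact: tr.
Qed.

Lemma double0 (G : zmodType) (le : rel G) : ordered_abelian_group le ->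
  forall h : G, h + h = 0 -> h = 0.
Proof.
case=> rf tr an to tl h hh.
case/orP: (to 0 h) => H.
  have := tl _ _ h H; rewrite add0r hh => H2.
  by apply: an; rewrite H H2.
have := tl _ _ h H; rewrite add0r hh => H2.
by apply: an; rewrite H H2.
Qed.

Theorem proposition2p5 (K : fieldType) (G : zmodType) (le : rel G)
    (nu : K -> option G) (d : nat) (X : 'rV[K]_d -> Prop) :
  is_valuation le nu ->
  (0 < d)%N ->
  (forall (x y z : 'rV[K]_d) (alpha beta gamma : K),
      X x -> X y -> X z ->
      val_ring le nu alpha -> val_ring le nu beta -> val_ring le nu gamma ->
      alpha + beta + gamma = 1 ->
      X (alpha *: x + beta *: y + gamma *: z)) ->
  convex (val_ring le nu) X.
Proof.
move=> [og nuN nuM nuD] _ H3.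
have og' := og; case: og' => rf tr an to tl.
have nu0 : nu 0 = None by apply/nuN.
have nz : forall a : K, a != 0 -> exists g, nu a = Some g.
  move=> a a0; case E: (nu a) => [g|]; first by exists g.
  by move/nuN: E => E; rewrite E eqxx in a0.
have nu1 : nu 1 = Some 0.
  have [g Hg] := nz 1 (oner_neq0 K).
  have := nuM 1 1; rewrite mulr1 Hg /= => -[] /esym hg.
  congr Some; apply: (addrI g); by rewrite hg addr0.
have nuN1 : nu (-1) = Some 0.
  have n1 : (-1 : K) != 0 by rewrite oppr_eq0 oner_neq0.
  have [g Hg] := nz (-1) n1.
  have := nuM (-1) (-1); rewrite mulrNN mulr1 nu1 Hg /= => -[] hg.
  by rewrite (@double0 _ _ og g (esym hg)).
have O0 : val_ring le nu 0 by rewrite /val_ring nu0.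
have O1 : val_ring le nu 1 by rewrite /val_ring nu1 /= rf.
have ON : forall a, val_ring le nu a -> val_ring le nu (- a).
  move=> a; rewrite /val_ring -mulN1r nuM nuN1.
  by case: (nu a) => [g|] //=; rewrite add0r.
have OD : forall a b, val_ring le nu a -> val_ring le nu b -> val_ring le nu (a + b).
  move=> a b Ha Hb; apply: (@le_inf_trans _ _ tr _ _ _ _ (nuD a b)).
  by rewrite /min_inf; case: ifP.
have Odiv : forall a b, val_ring le nu a -> val_ring le nu b ->
     (exists2 t, val_ring le nu t & b = t * a) \/ (exists2 t, val_ring le nu t & a = t * b).
  move=> a b Ha Hb.
  have gen : forall a b : K, a != 0 -> b != 0 -> forall ga gb, nu a = Some ga ->
      nu b = Some gb -> le ga gb -> exists2 t, val_ring le nu t & b = t * a.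
    move=> a' b' a0 b0 ga gb Ea Eb lab; exists (b' / a'); last by rewrite mulfVK.
    have := nuM (b' / a') a'; rewrite mulfVK // Eb Ea /val_ring.
    case: (nu (b' / a')) => [w|] //= -[] Eg.
    by move: (tl _ _ (- ga) lab); rewrite Eg subrr addrK.
  have [->|a0] := eqVneq a 0; first by right; exists 0 => //; rewrite mul0r.
  have [->|b0] := eqVneq b 0; first by left; exists 0 => //; rewrite mul0r.
  have [ga Ea] := nz a a0; have [gb Eb] := nz b b0.
  case/orP: (to ga gb) => H.
    by left; apply: (gen a b a0 b0 ga gb).
  by right; apply: (gen b a b0 a0 gb ga).
move=> n x alpha n0 Xx Oa Hs.
case: n n0 x alpha Xx Oa Hs => [//|m] _ x alpha Xx Oa Hs.
exact: (@key K (val_ring le nu) d X O0 O1 ON OD Odiv H3 m x alpha Xx Oa Hs).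
Qed.
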